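(* Let $n,x$ be integers with $1<x<n$, so that $G=C_{2n}(x,1,n)$ is a $5$-regular circulant graph. If $n\equiv 1\pmod 3$, $x\equiv 2\pmod 3$ and $1<x\leq \tfrac{2n}{3}$, then $G$ is word-representable.
   Context: Two distinct letters $x,y$ alternate in a word $w$ if, after deleting all other letters from $w$, the resulting word is of the form $xyxy\cdots$ or $yxyx\cdots$ (of even or odd length). A graph $G=(V,E)$ is word-representable if there is a word $w$ over the alphabet $V$, containing every letter of $V$ at least once, such that for all distinct $x,y\in V$, $xy\in E$ if and only if $x$ and $y$ alternate in $w$. For an integer $m$ and a set $R$ of positive integers each at most $m/2$, the circulant graph $C_m(R)$ has vertex set $\{0,1,\dots,m-1\}$, with $i$ and $j$ adjacent iff $\min(|i-j|,\,m-|i-j|)\in R$. $C_{2n}(x,1,n)$ denotes the circulant graph on $2n$ vertices with jump set $\{1,x,n\}$; it is $5$-regular exactly when $1<x<n$. *)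

(* Defs.v *)
From mathcomp Require Import all_boot.
Set Implicit Arguments. Unset Strict Implicit. Unset Printing Implicit Defensive.

Definition alt_seq (T : Type) (a b : T) (k : nat) : seq T :=
  mkseq (fun i => if odd i then b else a) k.

Definition alternate (T : eqType) (w : seq T) (x y : T) : bool :=
  let s := filter (fun z => (z == x) || (z == y)) w in
  (s == alt_seq x y (size s)) || (s == alt_seq y x (size s)).

Definition word_representable (T : finType) (E : rel T) : Prop :=
  exists w : seq T, (forall v : T, v \in w) /\
    (forall x y : T, x != y -> (E x y <-> alternate w x y)).

Definition circ_dist (m : nat) (i j : 'I_m) : nat :=
  let d := maxn i j - minn i j in minn d (m - d).

Definition circulant_adj (m : nat) (R : seq nat) : rel 'I_m :=
  fun i j => (i != j) && (circ_dist i j \in R).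
Arguments circulant_adj m R : clear implicits.

(* Main.v *)
Require Import Defs.
From mathcomp Require Import all_boot.
Set Implicit Arguments. Unset Strict Implicit. Unset Printing Implicit Defensive.

From mathcomp Require Import zify.
Section Generic.
Variables (T : finType) (E : rel T) (r : T -> nat).
Hypothesis Esym : forall a b, E a b = E b a.
Hypothesis rinj : injective r.
Definition oe : rel T := fun a b => E a b && (r a < r b).
Hypothesis HST : forall w u v z, connect oe w u -> connect oe u v -> connect oe v z ->
  oe w z -> u = v \/ E u v.

Definition leR : rel T := fun a b => r a <= r b.
Definition PP := sort leR (enum T).

Lemma PP_uniq : uniq PP. Proof. by rewrite sort_uniq enum_uniq. Qed.
Lemma mem_PP a : a \in PP. Proof. by rewrite mem_sort mem_enum. Qed.
Lemma PP_sorted : sorted leR PP.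
Proof. apply: sort_sorted => a b; exact: leq_total. Qed.

Definition pr2 (a b : T) := fun z : T => (z == a) || (z == b).

Lemma filter2 a b : r a < r b -> [seq z <- PP | pr2 a b z] = [:: a; b].
Proof.
move=> rab.
have ab : a != b by apply/eqP => eab; rewrite eab ltnn in rab.
set s := filter _ PP.
have ss : sorted leR s.
  by apply: sorted_filter; [move=> y x0 z; exact: leq_trans | exact: PP_sorted].
have us : uniq s := filter_uniq _ PP_uniq.
have pe : perm_eq s [:: a; b].
  apply: uniq_perm => //=; first by rewrite inE ab.
  by move=> z; rewrite mem_filter mem_PP andbT !inE.
have ms := perm_mem pe.
have := perm_size pe.
case: s ss us ms {pe} => [|c [|d [|? ?]]] //= ss us ms _.
have hc : c \in [:: a; b] by rewrite -ms inE eqxx.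
have hd : d \in [:: a; b] by rewrite -ms !inE eqxx orbT.
move: hc hd ss us; rewrite !inE /leR /= andbT.
case/orP => /eqP -> ; case/orP => /eqP -> //=; rewrite ?eqxx //.
by rewrite leqNgt rab.
Qed.

Definition blk (B : pred T) := [seq z <- PP | B z].
Definition part (A D : pred T) := blk A ++ blk D ++ blk (predC A) ++ blk (predC D).

Lemma filter_blk a b (B : pred T) : r a < r b ->
  [seq z <- blk B | pr2 a b z] = (if B a then [:: a] else [::]) ++ (if B b then [:: b] else [::]).
Proof.
move=> rab; rewrite /blk -filter_predI.
rewrite (eq_filter (a2 := predI B (pr2 a b))); last by move=> z /=; rewrite andbC.
by rewrite filter_predI filter2 //=; case: (B a); case: (B b).
Qed.

Lemma filter_part a b A D : r a < r b ->
  [seq z <- part A D | pr2 a b z] =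
  (if A a then [:: a] else [::]) ++ (if A b then [:: b] else [::]) ++
  (if D a then [:: a] else [::]) ++ (if D b then [:: b] else [::]) ++
  (if ~~ A a then [:: a] else [::]) ++ (if ~~ A b then [:: b] else [::]) ++
  (if ~~ D a then [:: a] else [::]) ++ (if ~~ D b then [:: b] else [::]).
Proof.
move=> rab; rewrite /part !filter_cat !filter_blk //=.
by rewrite -!catA.
Qed.

Lemma part_edge a b A D : r a < r b -> (A b ==> A a) -> (D b ==> D a) -> (D a ==> A b) ->
  (D a ==> A a) -> [seq z <- part A D | pr2 a b z] = [:: a; b; a; b].
Proof.
move=> rab; rewrite filter_part //.
by case: (A a); case: (A b); case: (D a); case: (D b).
Qed.


Fixpoint rep (s : seq T) : bool :=
  if s is a :: s' then (if s' is b :: _ then (a == b) || rep s' else false) else false.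

Lemma rep_catl s t : rep s -> rep (s ++ t).
Proof.
elim: s => [|a s IH] //=; case: s IH => [|b s] IH //=.
by case/orP => [->//|h]; apply/orP; right; exact: IH h.
Qed.

Lemma rep_catr s t : rep t -> rep (s ++ t).
Proof.
elim: s => [|a s IH] //= Ht; have := IH Ht.
by case: (s ++ t) => [|b u] //= ->; rewrite orbT.
Qed.

Lemma alt_seqS (a b : T) k : alt_seq a b k.+1 = a :: alt_seq b a k.
Proof.
rewrite /alt_seq /mkseq /= (_ : iota 1 k = map (addn 1) (iota 0 k)); last by rewrite -iotaDl.
rewrite -map_comp; congr (_ :: _).
by apply: eq_map => i /=; rewrite add0n; case: (odd i).
Qed.

Lemma alt_norep (a b : T) k : a != b -> ~~ rep (alt_seq a b k).
Proof.
elim: k a b => [|k IH] a b ab; first by [].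
case: k IH => [|k] IH; first by rewrite alt_seqS.
rewrite !alt_seqS.
have := IH b a; rewrite eq_sym ab alt_seqS => /(_ isT) h.
rewrite (_ : rep (a :: b :: alt_seq a b k) = (a == b) || rep (b :: alt_seq a b k)) //.
by rewrite (negbTE ab) orFb.
Qed.

Lemma alternate_rep (w : seq T) (a b : T) : a != b -> alternate w a b -> ~~ rep [seq z <- w | pr2 a b z].
Proof.
move=> ab; rewrite /alternate /pr2; case/orP => /eqP ->; apply: alt_norep => //.
by rewrite eq_sym.
Qed.

Lemma alternate_sym (w : seq T) (a b : T) : alternate w a b = alternate w b a.
Proof.
rewrite /alternate.
have -> : [seq z <- w | (z == b) || (z == a)] = [seq z <- w | (z == a) || (z == b)].
  by apply: eq_filter => z; rewrite orbC.
by rewrite orbC.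
Qed.

Lemma flatten_alt (a b : T) (s : seq T) (f : T -> seq T) :
  (forall u, f u = [:: a; b; a; b; a; b; a; b]) ->
  flatten [seq f u | u <- s] = alt_seq a b (8 * size s).
Proof.
move=> hf; elim: s => [|u s IH] //=.
by rewrite hf IH mulnS !addSn add0n !alt_seqS.
Qed.

Lemma rep_in (s : seq T) (f : T -> seq T) u : u \in s -> rep (f u) -> rep (flatten [seq f v | v <- s]).
Proof.
elim: s => [|c s IH] //=; rewrite inE => /orP [/eqP <- h|/IH h1 h2].
  exact: rep_catl.
exact: rep_catr (h1 h2).
Qed.

Definition anc (u : T) : pred T := fun w => connect oe w u.
Definition Ap (u : T) : pred T := fun w =>
  [exists d, anc u d && [exists y, ((y == d) || oe d y) && connect oe w y]].

Definition fpart (u : T) := part (Ap u) (anc u) ++ part predT (anc u).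
Definition theword := flatten [seq fpart u | u <- enum T].

Lemma conn_r a b : connect oe a b -> r a <= r b.
Proof.
move/connectP => [p pth ->]; elim: p a pth => [|c p IH] a //= /andP [/andP [_ rac] pth].
exact: leq_trans (ltnW rac) (IH _ pth).
Qed.

Lemma fpart_edge a b u : oe a b -> [seq z <- fpart u | pr2 a b z] = [:: a; b; a; b; a; b; a; b].
Proof.
move=> eab; have rab : r a < r b by case/andP: eab.
rewrite /fpart filter_cat.
have ancD : anc u b ==> anc u a.
  by apply/implyP => h; apply: connect_trans (connect1 eab) h.
have X1 : Ap u b ==> Ap u a.
  apply/implyP => /existsP [d /andP [hd /existsP [y /andP [hy cy]]]].
  apply/existsP; exists d; rewrite hd /=; apply/existsP; exists y; rewrite hy /=.
  exact: connect_trans (connect1 eab) cy.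
have X3 : anc u a ==> Ap u b.
  apply/implyP => ha; apply/existsP; exists a; rewrite ha /=; apply/existsP; exists b.
  by apply/andP; split; [apply/orP; right; exact: eab | exact: connect0].
have X4 : anc u a ==> Ap u a.
  apply/implyP => ha; apply/existsP; exists a; rewrite ha /=; apply/existsP; exists a.
  by rewrite eqxx connect0.
rewrite (@part_edge a b (Ap u) (anc u) rab X1 ancD X3 X4).
by rewrite (@part_edge a b predT (anc u) rab (implybT _) ancD (implybT _) (implybT _)).
Qed.

Theorem semi_wr : word_representable E.
Proof.
exists theword; split.
  move=> v; apply/flattenP; exists (fpart v); first by apply/mapP; exists v; rewrite ?mem_enum.
  rewrite /fpart mem_cat; apply/orP; right; rewrite /part mem_cat; apply/orP; left; by rewrite /blk mem_filter mem_PP.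
move=> a b ab.
wlog rab : a b ab / r a < r b.
  move=> H; have : r a != r b by rewrite (inj_eq rinj).
  rewrite neq_ltn => /orP [h|h]; first exact: H.
  rewrite Esym alternate_sym; apply: H => //; by rewrite eq_sym.
split.
  move=> Eab; have eab : oe a b by rewrite /oe Eab rab.
  rewrite /alternate.
  have -> : [seq z <- theword | (z == a) || (z == b)] = alt_seq a b (8 * size (enum T)).
    rewrite /theword filter_flatten -map_comp; apply: flatten_alt => u /=.
    exact: (fpart_edge u eab).
  by rewrite size_mkseq eqxx.
move=> alt; case Eab : (E a b) => //; exfalso.
have := alternate_rep ab alt; apply/negP/negPn.
rewrite /theword filter_flatten -map_comp.
case: (boolP (connect oe a b)) => cab.
  apply: (rep_in (u := a)); first by rewrite mem_enum.
  rewrite /= /fpart filter_cat; apply: rep_catl; rewrite filter_part //.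
  have Da : anc a a by exact: connect0.
  have Apa : Ap a a.
    apply/existsP; exists a; rewrite Da /=; apply/existsP; exists a; by rewrite eqxx connect0.
  have Apb : Ap a b = false.
    apply/negbTE/negP => /existsP [d /andP [hd /existsP [y /andP [hy cy]]]].
    case/orP: hy => [/eqP eyd|edy].
      rewrite eyd in cy; have := conn_r (connect_trans cy hd).
      by rewrite leqNgt rab.
    have [eq_ab|Eab'] := HST hd cab cy edy; first by rewrite eq_ab eqxx in ab.
    by rewrite Eab in Eab'.
  have Db : anc a b = false.
    apply/negbTE/negP => hb; have := conn_r hb; by rewrite leqNgt rab.
  by rewrite Da Apa Apb Db /= eqxx.
apply: (rep_in (u := b)); first by rewrite mem_enum.
rewrite /= /fpart filter_cat; apply: rep_catr; rewrite filter_part //.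
have Db : anc b b by exact: connect0.
have Da : anc b a = false by apply/negbTE.
by rewrite Da Db /= eqxx orbT.
Qed.

End Generic.
Section Arith.
Variables n x : nat.
Hypotheses (Hx1 : 1 < x) (Hxn : x < n) (Hn3 : n %% 3 = 1) (Hx3 : x %% 3 = 2) (H3x : 3 * x <= 2 * n).

Definition col (p : nat) := p %% 3.

Definition DS (p q : nat) : Prop := p < 2*n /\ q < 2*n /\ col p <= 2 /\ col q <= 2 /\
  ((q = p+1 /\ col q = col p + 1) \/ (p = 0 /\ q = 2*n - 1 /\ col p = 0 /\ col q = 1) \/
   (q + 1 = p /\ col p = 0 /\ col q = 2) \/
   (q = p + x /\ col p = 0 /\ col q = 2) \/ (q + x = p /\ col q = col p + 1) \/
   (p < x /\ q = p + (2*n - x) /\ col q = col p) \/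
   (q = p + n /\ col q = col p + 1) \/ (q + n = p /\ col p = 0 /\ col q = 2)).

Ltac sd H := let b1 := fresh "b" in let b2 := fresh "b" in let b3 := fresh "b" in let b4 := fresh "b" in let h := fresh "h" in
  destruct H as [b1 [b2 [b3 [b4 [h|[h|[h|[h|[h|[h|[h|h]]]]]]]]]]].

Lemma no_path5 a0 a1 a2 a3 a4 a5 :
  DS a0 a1 -> DS a1 a2 -> DS a2 a3 -> DS a3 a4 -> DS a4 a5 -> False.
Proof.
move=> A1 A2 A3 A4 A5.
sd A1; try lia; sd A2; try lia; sd A3; try lia; sd A4; try lia; sd A5; lia.
Qed.

Definition AD (p q : nat) : Prop :=
  p + 1 = q \/ q + 1 = p \/ p + (2*n-1) = q \/ q + (2*n-1) = p \/
  p + x = q \/ q + x = p \/ p + (2*n - x) = q \/ q + (2*n-x) = p \/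
  p + n = q \/ q + n = p.

Lemma no_c4 a0 a1 a2 a3 a4 :
  DS a0 a1 -> DS a1 a2 -> DS a2 a3 -> DS a3 a4 -> DS a0 a4 -> False.
Proof.
move=> A1 A2 A3 A4 A5.
sd A1; try lia; sd A2; try lia; sd A3; try lia; sd A4; try lia; sd A5; lia.
Qed.

Lemma c3 a0 a1 a2 a3 :
  DS a0 a1 -> DS a1 a2 -> DS a2 a3 -> DS a0 a3 -> (a0 + n = a2 \/ a2 + n = a0) /\ (a1 + n = a3 \/ a3 + n = a1).
Proof.
move=> A1 A2 A3 A4.
sd A1; try (exfalso; lia); sd A2; try (exfalso; lia); sd A3; try (exfalso; lia); sd A4; try (exfalso; lia); lia.
Qed.


Notation TT := ('I_(2 * n)).
Definition EE : rel TT := circulant_adj (2 * n) [:: 1; x; n].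
Definition rr (i : TT) : nat := (i %% 3) * (2 * n) + i.

Lemma EEsym a b : EE a b = EE b a.
Proof. by rewrite /EE /circulant_adj /circ_dist (maxnC a) (minnC a) eq_sym. Qed.

Lemma rr_inj : injective rr.
Proof.
move=> a b h; apply: val_inj.
have := congr1 (modn^~ (2 * n)) h; rewrite /rr !modnMDl !modn_small //.
Qed.

Ltac pick := first [ left; lia | right; pick | lia ].

Lemma EE_AD (a b : TT) : EE a b -> AD a b.
Proof.
have ha := ltn_ord a; have hb := ltn_ord b.
rewrite /EE /circulant_adj /circ_dist !inE => /andP [/eqP nab].
rewrite /AD; case: (leqP a b) => hab.
  case: (leqP (b - a) (2 * n - (b - a))) => hm.
    by case/or3P => /eqP h; pick.
  by case/or3P => /eqP h; pick.
case: (leqP (a - b) (2 * n - (a - b))) => hm.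
  by case/or3P => /eqP h; pick.
by case/or3P => /eqP h; pick.
Qed.

Lemma n_EE (a b : TT) : (nat_of_ord a + n = nat_of_ord b \/ nat_of_ord b + n = nat_of_ord a) -> EE a b.
Proof.
have ha := ltn_ord a; have hb := ltn_ord b.
move=> h; rewrite /EE /circulant_adj /circ_dist !inE.
apply/andP; split.
  by apply/eqP => eab; rewrite eab in h; lia.
apply/or3P; apply: Or33; apply/eqP; lia.
Qed.

Lemma rr_lt (a b : TT) : rr a < rr b -> a %% 3 < b %% 3 \/ (a %% 3 = b %% 3 /\ nat_of_ord a < nat_of_ord b).
Proof.
have ha := ltn_ord a; have hb := ltn_ord b; rewrite /rr.
have := ltn_pmod a (isT : 0 < 3); have := ltn_pmod b (isT : 0 < 3).
case: (a %% 3) => [|[|[|?]]]; case: (b %% 3) => [|[|[|?]]] //= _ _; lia.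
Qed.

Lemma edge_DS (a b : TT) : oe EE rr a b -> DS a b.
Proof.
case/andP => /EE_AD hab /rr_lt ho.
have ha := ltn_ord a; have hb := ltn_ord b.
rewrite /DS /col; split; first done; split; first done.
split; first by have := ltn_pmod a (isT : 0 < 3); lia.
split; first by have := ltn_pmod b (isT : 0 < 3); lia.
case: hab => [h|[h|[h|[h|[h|[h|[h|[h|[h|h]]]]]]]]].
- left; lia.
- right; right; left; lia.
- right; left; lia.
- exfalso; lia.
- right; right; right; left; lia.
- right; right; right; right; left; lia.
- right; right; right; right; right; left; lia.
- exfalso; lia.
- right; right; right; right; right; right; left; lia.
- right; right; right; right; right; right; right; lia.
Qed.

Lemma path_size (a : TT) p : path (oe EE rr) a p -> size p <= 4.
Proof.
case: p => [|b1 [|b2 [|b3 [|b4 [|b5 p]]]]] //= /andP [e1 /andP [e2 /andP [e3 /andP [e4 /andP [e5 _]]]]].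
exfalso; exact: (no_path5 (edge_DS e1) (edge_DS e2) (edge_DS e3) (edge_DS e4) (edge_DS e5)).
Qed.

Lemma closed_size (a : TT) p : path (oe EE rr) a p -> oe EE rr a (last a p) -> size p <= 3.
Proof.
move=> pth; have := path_size pth.
case: p pth => [|b1 [|b2 [|b3 [|b4 [|b5 p]]]]] //=.
move=> /andP [e1 /andP [e2 /andP [e3 /andP [e4 _]]]] _ e5.
exfalso; exact: (no_c4 (edge_DS e1) (edge_DS e2) (edge_DS e3) (edge_DS e4) (edge_DS e5)).
Qed.

Lemma oeE (a b : TT) : oe EE rr a b -> EE a b.
Proof. by case/andP. Qed.

Lemma HSTc (w u v z : TT) : connect (oe EE rr) w u -> connect (oe EE rr) u v ->
  connect (oe EE rr) v z -> oe EE rr w z -> u = v \/ EE u v.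
Proof.
move=> /connectP [p1 P1 ->] /connectP [p2 P2 ->] /connectP [p3 P3 ->] ewz.
have := closed_size (a := w) (p := p1 ++ p2 ++ p3).
rewrite cat_path P1 /= cat_path P2 P3 !last_cat => /(_ isT ewz).
rewrite !size_cat.
case: p2 P2 P3 ewz => [|b1 [|b2 [|b3 p2]]] /= P2 P3 ewz hs.
- by left.
- by right; case/andP: P2 => /oeE.
- case/andP: P2 => e1 /andP [e2 _].
  case: p3 P3 ewz hs => [|d1 [|d2 p3]] /= P3 ewz hs.
  + case: p1 P1 e1 ewz hs => [|c1 [|c2 p1]] /= P1 e1 ewz hs.
    * by right; apply: oeE.
    * right; case/andP: P1 => e0 _.
      have [_ h] := c3 (edge_DS e0) (edge_DS e1) (edge_DS e2) (edge_DS ewz).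
      exact: n_EE.
    * by exfalso; lia.
  + case: p1 P1 e1 ewz hs => [|c1 p1] /= P1 e1 ewz hs; last by exfalso; lia.
    right; case/andP: P3 => e3 _.
    have [h _] := c3 (edge_DS e1) (edge_DS e2) (edge_DS e3) (edge_DS ewz).
    exact: n_EE.
  + by exfalso; lia.
- case: p2 P2 P3 ewz hs => [|b4 p2] /= P2 P3 ewz hs; last by exfalso; lia.
  case: p1 P1 P2 P3 ewz hs => [|c1 p1] /= P1 P2 P3 ewz hs; last by exfalso; lia.
  case: p3 P3 ewz hs => [|d1 p3] /= P3 ewz hs; last by exfalso; lia.
  by right; apply: oeE.
Qed.

Lemma main_sec : word_representable EE.
Proof.
apply: (@semi_wr _ EE rr EEsym rr_inj HSTc).
Qed.

End Arith.

Theorem corollary7 (n x : nat) :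
  1 < x -> x < n ->
  n %% 3 = 1 -> x %% 3 = 2 -> 3 * x <= 2 * n ->
  word_representable (circulant_adj (2 * n) [:: 1; x; n]).
Proof.
move=> H1 H2 H3 H4 H5.
exact: (@main_sec n x H1 H2 H3 H4 H5).
Qed.
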